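(* Let $G$ be a connected simple graph without bridges whose edge set is identified with $[d+1]$, let $B_1,\dots,B_n$ be the bases (spanning trees) of its graphic matroid, all of cardinality $k$, and let $P=\operatorname{tconv}(V)$ with $V=(-e_{B_1},\dots,-e_{B_n})$. Then: (1) the set of pseudovertices of $P$ is $\{-e_J: J=\bigcup_{i\in I}B_i \text{ for some } I\subseteq[n]\}$; (2) the set of pseudovertices of the tropical standard simplex $\Delta^d=\operatorname{tconv}\{-e_1,\dots,-e_{d+1}\}$ is $\{-e_J: J\subseteq[d+1],\ 1\le|J|\le d\}$; (3) let $(T^{(0)}_1,\dots,T^{(0)}_{d+1})=\operatorname{type}_V(\mathbf{0})$, and let $-e_J$ be a pseudovertex of $P$ with $[d+1]\setminus J=\{i_1,\dots,i_r\}$; then $\operatorname{type}_V(-e_J)=(T_1,\dots,T_{d+1})$ where $$T_j=\begin{cases}T^{(0)}_j\setminus\big(T^{(0)}_{i_1}\cup\cdots\cup T^{(0)}_{i_r}\big) & \text{if } j\in J,\\ T^{(0)}_j\cup\big((T^{(0)}_{i_1})^C\cap\cdots\cap(T^{(0)}_{i_r})^C\big) & \text{otherwise,}\end{cases}$$ with complements taken in $[n]$.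
   Context: Tropical arithmetic is min-plus; $\mathbb{T}^d=\mathbb{R}^{d+1}/\mathbb{R}(1,\dots,1)$; $\operatorname{tconv}\{v_1,\dots,v_n\}=\{\bigoplus_l\lambda_l\odot v_l:\lambda_l\in\mathbb{R}\}$; $e_J=\sum_{i\in J}e_i$, and $\mathbf{0}$ is the origin. For $m\in[d+1]$ let $\bar S_m=\{\xi\in\mathbb{T}^d:\xi_m=\min_i\xi_i\}$. For generators $V=(v_1,\dots,v_n)$ and $x\in\mathbb{T}^d$, $\operatorname{type}_V(x)=(T_1,\dots,T_{d+1})$ with $T_m=\{l\in[n]:v_l\in x+\bar S_m\}$. The cells $\{x:\operatorname{type}_V(x)=\mathcal{T}\}$ have closures forming a polyhedral subdivision $\mathcal{C}_V$ of $\mathbb{T}^d$ (the tropical complex); the pseudovertices of the tropical polytope $\operatorname{tconv}(V)$ are the zero-dimensional cells of $\mathcal{C}_V$. *)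

(* Defs.v *)
From HB Require Import structures.
From mathcomp Require Import all_boot all_order all_algebra.
From mathcomp Require Import reals.
Set Implicit Arguments. Unset Strict Implicit. Unset Printing Implicit Defensive.
Import Order.TTheory GRing.Theory Num.Theory.
Local Open Scope ring_scope.

Section Tropical.
Variable R : realType.
Variables (d n : nat).

(* Points of T^d are represented by vectors of R^(d+1); [tequiv] is equality
   modulo R(1,...,1). *)
Definition tequiv (x y : 'rV[R]_(d.+1)) : Prop :=
  exists c : R, forall i, x 0 i = y 0 i + c.

Definition eJ (J : {set 'I_(d.+1)}) : 'rV[R]_(d.+1) :=
  \row_(i < d.+1) (if i \in J then 1 else 0).

Definition tconv (V : 'I_n -> 'rV[R]_(d.+1)) (x : 'rV[R]_(d.+1)) : Prop :=
  exists lam : 'I_n -> R, forall i,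
    (forall l, x 0 i <= lam l + V l 0 i) /\ (exists l, x 0 i = lam l + V l 0 i).

(* type_V(x) = (T_1,...,T_{d+1}),  T_m = {l : v_l in x + S_m},
   S_m = {xi : xi_m = min_i xi_i} *)
Definition ttype (V : 'I_n -> 'rV[R]_(d.+1)) (x : 'rV[R]_(d.+1))
  : {ffun 'I_(d.+1) -> {set 'I_n}} :=
  [ffun m => [set l | [forall i, V l 0 m - x 0 m <= V l 0 i - x 0 i]]].

(* pseudovertices of tconv(V) = zero-dimensional cells of the tropical complex:
   points x whose cell {y : type_V(y) = type_V(x)} is a single point of T^d *)
Definition pseudovertex (V : 'I_n -> 'rV[R]_(d.+1)) (x : 'rV[R]_(d.+1)) : Prop :=
  forall y, ttype V y = ttype V x -> tequiv y x.

End Tropical.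

Section Graphs.
Variables (Vt : finType) (d : nat) (src tgt : 'I_(d.+1) -> Vt).

Definition adj (F : {set 'I_(d.+1)}) : rel Vt :=
  fun u v => [exists e in F,
    ((src e == u) && (tgt e == v)) || ((src e == v) && (tgt e == u))].

Definition simple_graph : Prop :=
  (forall e, src e != tgt e) /\
  (forall e e', ((src e == src e') && (tgt e == tgt e'))
                || ((src e == tgt e') && (tgt e == src e')) -> e = e').

Definition spanning_connected (F : {set 'I_(d.+1)}) : Prop :=
  forall u v, connect (adj F) u v.

Definition connected_graph : Prop := spanning_connected setT.

Definition bridgeless : Prop := forall e, spanning_connected [set~ e].

Definition acyclic (F : {set 'I_(d.+1)}) : Prop :=
  forall e, e \in F -> ~~ connect (adj (F :\ e)) (src e) (tgt e).

(* bases of the graphic matroid of a connected graph = spanning trees *)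
Definition spanning_tree (F : {set 'I_(d.+1)}) : Prop :=
  spanning_connected F /\ acyclic F.

End Graphs.

(* Main.v *)
Require Import Defs.
From HB Require Import structures.
From mathcomp Require Import all_boot all_order all_algebra.
From mathcomp Require Import reals.
From mathcomp Require Import lra.
Set Implicit Arguments. Unset Strict Implicit. Unset Printing Implicit Defensive.
Import Order.TTheory GRing.Theory Num.Theory.

Lemma fclosed_connect (T : finType) (e : rel T) (a : pred T) :
  (forall x y, e x y -> a x -> a y) -> forall x y, connect e x y -> a x -> a y.
Proof.
move=> H x y /connectP [p pth ->]; elim: p x pth => //= z p IH x /andP [exz pz] ax.
exact: IH pz (H _ _ exz ax).
Qed.

Lemma connect_cut (T : finType) (e : rel T) (a : pred T) x y :
  connect e x y -> a x -> ~~ a y -> exists u v, [/\ e u v, a u & ~~ a v].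
Proof.
move=> /connectP [p pth ->]; elim: p x pth => /= [x _ ax|z p IH x /andP [exz pz] ax];
  first by rewrite ax.
case az: (a z); first exact: IH.
by move=> _; exists x, z; rewrite az exz ax.
Qed.

Section G.
Variables (Vt : finType) (d : nat) (src tgt : 'I_(d.+1) -> Vt).
Local Notation adj := (adj src tgt).

Lemma adjC (F : {set 'I_(d.+1)}) u v : adj F u v = adj F v u.
Proof. by apply: eq_existsb => e; rewrite [X in _ && X]orbC. Qed.

Lemma connC (F : {set 'I_(d.+1)}) u v : connect (adj F) u v = connect (adj F) v u.
Proof. by rewrite ((sym_connect_sym (fun u v => adjC F u v))). Qed.

Lemma adj_edge (F : {set 'I_(d.+1)}) e : e \in F -> adj F (src e) (tgt e).
Proof. by move=> eF; apply/existsP; exists e; rewrite eF !eqxx. Qed.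

Lemma adjP (F : {set 'I_(d.+1)}) u v : adj F u v ->
  exists2 e, e \in F & (src e = u /\ tgt e = v) \/ (src e = v /\ tgt e = u).
Proof.
move=> /existsP [e /andP [eF H]]; exists e => //.
by case/orP: H => /andP [/eqP a /eqP b]; [left|right].
Qed.

Lemma conn_mono (F G : {set 'I_(d.+1)}) u v : F \subset G -> connect (adj F) u v -> connect (adj G) u v.
Proof.
move=> FG; apply: connect_sub => x y /adjP [e eF H]; apply: connect1.
have eG := subsetP FG e eF.
by case: H => [[<- <-]|[<- <-]]; [|rewrite adjC]; apply: adj_edge.
Qed.

Lemma reroute (F : {set 'I_(d.+1)}) g u v : connect (adj (F :\ g)) (src g) (tgt g) ->
  connect (adj F) u v -> connect (adj (F :\ g)) u v.
Proof.
move=> Hg; apply: connect_sub => x y /adjP [e eF H].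
have [eg|neg] := eqVneq e g.
  subst e; by case: H => [[<- <-]|[<- <-]] //; rewrite connC.
have eFg : e \in F :\ g by rewrite !inE neg.
by apply: connect1; case: H => [[<- <-]|[<- <-]]; [|rewrite adjC]; apply: adj_edge.
Qed.

Lemma lemL (k : nat) (F : {set 'I_(d.+1)}) h (S : {set 'I_(d.+1)}) : #|F| <= k -> h \in F -> S \subset F :\ h ->
  connect (adj (F :\ h)) (src h) (tgt h) -> ~~ connect (adj S) (src h) (tgt h) ->
  exists g, [/\ g \in F :\ h, g \notin S & connect (adj (F :\ g)) (src g) (tgt g)].
Proof.
elim: k F => [|k IH] F cF hF SF Hc HS.
  by move: cF; rewrite leqn0 => /eqP/cards0_eq FE; move: hF; rewrite FE inE.
have [g gin] : exists g, g \in (F :\ h) :\: S.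
  apply/set0Pn; apply: contraNN HS => /eqP E.
  suff -> : S = F :\ h by [].
  by apply/eqP; rewrite eqEsubset SF /= -setD_eq0 E.
move: gin; rewrite inE => /andP [gS gFh].
have gh : g != h by move: gFh; rewrite !inE => /andP [].
have gF : g \in F by move: gFh; rewrite !inE => /andP [].
case Hc2: (connect (adj (F :\ h :\ g)) (src h) (tgt h)).
  have cF' : #|F :\ g| <= k by move: cF; rewrite (cardsD1 g F) gF add1n ltnS.
  have hF' : h \in F :\ g by rewrite !inE eq_sym gh.
  have SF' : S \subset F :\ g :\ h.
    apply/subsetP => x xS; have := subsetP SF x xS; rewrite !inE => /andP [-> ->].
    by rewrite andbT; apply: contraNneq gS => <-.
  have Hc' : connect (adj (F :\ g :\ h)) (src h) (tgt h).
    by apply: conn_mono Hc2; apply/subsetP => x; rewrite !inE => /and3P [-> -> ->].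
  have [g' [g'in g'S Hg']] := IH _ cF' hF' SF' Hc' HS.
  exists g'; split => //.
    by move: g'in; rewrite !inE => /and3P [-> _ ->].
  by apply: conn_mono Hg'; apply/subsetP => x; rewrite !inE => /and3P [-> _ ->].
exists g; split => //.
pose K := [pred w | connect (adj (F :\ h :\ g)) (src h) w].
have [u [v [uv uK vK]]] := connect_cut (a := K) Hc (connect0 _ _) (negbT Hc2).
have [e eF He] := adjP uv.
have eg : e = g.
  apply/eqP; apply: contraNT vK => neg; rewrite inE.
  have eF' : e \in F :\ h :\ g by move: eF; rewrite !inE neg.
  apply: connect_trans uK _; apply: connect1.
  by case: He => [[<- <-]|[<- <-]]; [|rewrite adjC]; apply: adj_edge.
subst e.
pose U := [pred w | K w || connect (adj (F :\ h :\ g)) v w].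
have Ucl : forall x y, adj (F :\ h) x y -> U x -> U y.
  move=> x y xy; have [e eF2 He2] := adjP xy.
  have [eg2|neg] := eqVneq e g.
    subst e; move=> _; rewrite inE.
    have : y = u \/ y = v by case: He => [[<- <-]|[<- <-]]; case: He2 => [[_ <-]|[<- _]]; auto.
    by case=> ->; [rewrite uK | apply/orP; right; exact: connect0].
  have xy' : adj (F :\ h :\ g) x y.
    have eF' : e \in F :\ h :\ g by move: eF2; rewrite !inE neg.
    by case: He2 => [[<- <-]|[<- <-]]; [|rewrite adjC]; apply: adj_edge.
  rewrite !inE => /orP [Kx|vx].
    by rewrite (connect_trans Kx (connect1 xy')).
  by rewrite (connect_trans vx (connect1 xy')) orbT.
have : U (tgt h) by apply: fclosed_connect Ucl _ _ Hc _; apply/orP; left; exact: connect0.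
rewrite /U /K !inE /= Hc2 /= => vt.
have sub1 : F :\ h :\ g \subset F :\ g.
  by apply/subsetP => x; rewrite !inE => /and3P [-> _ ->].
have ug : connect (adj (F :\ g)) u v.
  apply: connect_trans (_ : connect _ u (src h)) _.
    by rewrite connC; apply: conn_mono sub1 uK.
  apply: connect_trans (_ : connect _ (src h) (tgt h)) _.
    by apply: connect1; apply: adj_edge; rewrite !inE eq_sym gh.
  by rewrite connC; apply: conn_mono sub1 vt.
by case: He => [[-> ->]|[-> ->]] //; rewrite connC.
Qed.


Lemma tree_ext (S : {set 'I_(d.+1)}) : acyclic src tgt S -> connected_graph src tgt ->
  exists F : {set 'I_(d.+1)}, S \subset F /\ spanning_tree src tgt F.
Proof.
move=> aS cG.
pose P (F : {set 'I_(d.+1)}) := (S \subset F) && [forall u, forall v, connect (adj F) u v].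
have P0 : P setT.
  by rewrite /P subsetT /=; apply/forallP => u; apply/forallP => v; apply: cG.
case: (@arg_minnP _ setT P (fun F : {set 'I_(d.+1)} => #|F|) P0) => F /andP [SF /forallP cF] Fmin.
have cF' : spanning_connected src tgt F by move=> u v; exact: (forallP (cF u) v).
exists F; split => //; split => // h hF; apply/negP => Hh.
have key : forall g, g \in F -> connect (adj (F :\ g)) (src g) (tgt g) -> g \in S.
  move=> g gF Hg; apply: contraT => gS.
  have : P (F :\ g).
    apply/andP; split.
      by apply/subsetP => x xS; rewrite !inE (subsetP SF x xS) andbT; apply: contraNneq gS => <-.
    apply/forallP => u; apply/forallP => v; exact: reroute Hg (cF' u v).
  move=> /Fmin; rewrite (cardsD1 g F) gF add1n ltnn //.
have hS := key h hF Hh.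
have SF' : S :\ h \subset F :\ h.
  by apply/subsetP => x; rewrite !inE => /andP [-> /(subsetP SF) ->].
have [g [gin gS Hg]] := lemL (leqnn _) hF SF' Hh (aS h hS).
have gF : g \in F by move: gin; rewrite !inE => /andP [].
have gSS := key g gF Hg.
by move: gin gS; rewrite !inE gSS andbT => /andP [-> _].
Qed.

Lemma conn1_empty (u v : Vt) : connect (adj set0) u v -> u = v.
Proof.
move=> H; apply/eqP; rewrite eq_sym.
by apply: (fclosed_connect (a := pred1 u) _ H) => //= x y /existsP [e]; rewrite inE.
Qed.

Lemma conn_single k (u v : Vt) : connect (adj [set k]) u v -> u != v ->
  (src k = u /\ tgt k = v) \/ (src k = v /\ tgt k = u).
Proof.
move=> H uv.
have Hk : forall x y, adj [set k] x y -> (src k = x /\ tgt k = y) \/ (src k = y /\ tgt k = x).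
  by move=> x y /adjP [e]; rewrite inE => /eqP ->.
case Eu: ((u == src k) || (u == tgt k)).
  have : [pred w | (w == src k) || (w == tgt k)] v.
    apply: (fclosed_connect _ H) => //= x y /Hk HH.
    by case: HH => [[<- <-]|[<- <-]] _; rewrite eqxx ?orbT.
  move: Eu => /orP [/eqP Eu|/eqP Eu] /= /orP [/eqP Ev|/eqP Ev]; rewrite Eu Ev in uv *;
    by [move: uv; rewrite eqxx | left | right].
have : pred1 u v.
  apply: (fclosed_connect _ H) => //= x y /Hk [[E1 E2]|[E1 E2]] /eqP Ex; rewrite Ex in E1 E2;
  by move: Eu; rewrite -E1 -E2 eqxx ?orbT.
by rewrite /= eq_sym (negbTE uv).
Qed.

Lemma acyc2 e f : simple_graph src tgt -> e != f -> acyclic src tgt [set e; f].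
Proof.
move=> [nl ne] ef h; rewrite !inE => hin; apply/negP => Hc.
have [k [E kh]] : exists k, [set e; f] :\ h = [set k] /\ k != h.
  case/orP: hin => /eqP ->.
    exists f; split; last by rewrite eq_sym.
    by rewrite setU1K // inE.
  exists e; split => //.
  by rewrite setUC setU1K // inE eq_sym.
rewrite E in Hc; have [[A B]|[A B]] := conn_single Hc (nl h).
  by move: kh; rewrite (ne k h) ?eqxx // A B !eqxx.
by move: kh; rewrite (ne k h) ?eqxx // A B !eqxx orbT.
Qed.

Lemma acyc1 e : simple_graph src tgt -> acyclic src tgt [set e].
Proof.
move=> [nl ne] h; rewrite inE => /eqP ->; apply/negP => Hc.
have E : [set e] :\ e = set0 by apply/setP => x; rewrite !inE; case: (x == e).
by rewrite E in Hc; move: (nl e); rewrite (conn1_empty Hc) eqxx.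
Qed.

Lemma common_tree : simple_graph src tgt -> connected_graph src tgt ->
  forall e f, exists F : {set 'I_(d.+1)}, [/\ e \in F, f \in F & spanning_tree src tgt F].
Proof.
move=> sG cG e f; have [->|ef] := eqVneq e f.
  have [F [SF TF]] := tree_ext (acyc1 (e:=f) sG) cG.
  by exists F; split => //; apply: (subsetP SF); rewrite inE.
have [F [SF TF]] := tree_ext (acyc2 sG ef) cG.
by exists F; split => //; apply: (subsetP SF); rewrite !inE eqxx ?orbT.
Qed.

Lemma tree_nonempty (F : {set 'I_(d.+1)}) : simple_graph src tgt -> spanning_tree src tgt F -> F != set0.
Proof.
move=> [nl _] [cF _]; apply/negP => /eqP E.
by move: (cF (src ord0) (tgt ord0)); rewrite E => /conn1_empty; apply/eqP; apply: nl.
Qed.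

End G.

Lemma d_pos (Vt : finType) (d : nat) (src tgt : 'I_(d.+1) -> Vt) :
  simple_graph src tgt -> bridgeless src tgt -> (0 < d)%N.
Proof.
move=> [nl _] bl; case: d src tgt nl bl => // src' tgt' nl bl.
have E : [set~ (ord0 : 'I_1)] = set0 by apply/setP => x; rewrite !inE ord1 eqxx.
have := bl ord0 (src' ord0) (tgt' ord0); rewrite E => /conn1_empty.
by move/eqP; rewrite (negbTE (nl ord0)).
Qed.

Local Open Scope ring_scope.

Definition hrel (R : realType) (d n : nat) (V : 'I_n -> 'rV[R]_(d.+1)) (x : 'rV[R]_(d.+1)) : rel 'I_(d.+1) :=
  fun i m => [exists l, (l \in ttype V x i) && (l \in ttype V x m)].

Lemma ttypeP (R : realType) (d n : nat) (V : 'I_n -> 'rV[R]_(d.+1)) x m l :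
  (l \in ttype V x m) = [forall i, V l 0 m - x 0 m <= V l 0 i - x 0 i].
Proof. by rewrite ffunE inE. Qed.


Lemma eps_exists (R : realType) (s : seq R) :
  exists2 e : R, 0 < e & forall r, r \in s -> 0 < r -> e < r.
Proof.
elim: s => [|r s [e e0 He]]; first by exists 1.
case: (ltP 0 r) => r0; last first.
  exists e => // r'; rewrite inE => /orP [/eqP ->|/He //]; lra.
case: (ltP e r) => er.
  by exists e => // r'; rewrite inE => /orP [/eqP ->|/He //].
exists (r / 2); first lra.
move=> r'; rewrite inE => /orP [/eqP -> _|/He H /H]; lra.
Qed.

Section Trop.
Variables (R : realType) (d n : nat) (V : 'I_n -> 'rV[R]_(d.+1)).


Lemma ttype_tequiv x y : tequiv x y -> ttype V x = ttype V y.
Proof.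
move=> [c Hc]; apply/ffunP => m; rewrite !ffunE; apply/setP => l; rewrite !inE.
apply: eq_forallb => i; rewrite !Hc.
by apply/idP/idP => H; lra.
Qed.

Lemma hrelC x i m : hrel V x i m = hrel V x m i.
Proof. by apply: eq_existsb => l; rewrite andbC. Qed.

Lemma hconnC x i m : connect (hrel V x) i m = connect (hrel V x) m i.
Proof. by rewrite (sym_connect_sym (fun i m => hrelC x i m)). Qed.

Lemma pv_conn x : pseudovertex V x <-> forall i m, connect (hrel V x) i m.
Proof.
split => [pv i0 m|Hc y Hty].
  pose Cf j := connect (hrel V x) i0 j.
  have Csym : forall a b, hrel V x a b -> Cf a = Cf b.
    move=> a b ab; rewrite /Cf; apply/idP/idP => H.
      exact: connect_trans H (connect1 ab).
    by apply: connect_trans H (connect1 _); rewrite hrelC.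
  pose f (p : 'I_n * 'I_(d.+1) * 'I_(d.+1)) :=
    (V p.1.1 0 p.2 - x 0 p.2) - (V p.1.1 0 p.1.2 - x 0 p.1.2).
  have [e e0 He] := eps_exists [seq f p | p : 'I_n * 'I_(d.+1) * 'I_(d.+1)].
  have Hgap : forall l a b, V l 0 a - x 0 a < V l 0 b - x 0 b ->
      e < (V l 0 b - x 0 b) - (V l 0 a - x 0 a).
    move=> l a b ab; apply: (He (f (l, a, b))); first exact: image_f.
    rewrite /f /=; lra.
  pose y := \row_j (x 0 j + (if Cf j then e else 0)) : 'rV[R]_(d.+1).
  have Ty : ttype V y = ttype V x.
    apply/ffunP => k; rewrite !ffunE; apply/setP => l; rewrite !inE.
    apply/idP/idP => /forallP H; apply/forallP => i.
      have := H i; rewrite !mxE => Hi.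
      case: (leP (V l 0 k - x 0 k) (V l 0 i - x 0 i)) => // lt.
      have := Hgap _ _ _ lt; case: (Cf k) Hi; case: (Cf i); lra.
    have Hi := H i; rewrite !mxE.
    case: (ltgtP (V l 0 k - x 0 k) (V l 0 i - x 0 i)) => cmp.
    - have := Hgap _ _ _ cmp; case: (Cf k); case: (Cf i); lra.
    - lra.
    - have hki : hrel V x k i.
        apply/existsP; exists l; rewrite !ttypeP; apply/andP; split; apply/forallP => //.
        move=> j; have := H j; lra.
      rewrite (Csym _ _ hki); case: (Cf i); lra.
  have [c Hyc] := pv y Ty.
  suff : Cf m by [].
  have := Hyc i0; have := Hyc m; rewrite !mxE.
  have -> : Cf i0 by exact: connect0.
  case: (Cf m) => //; lra.
have Hy : forall i m, hrel V x i m -> y 0 i - x 0 i = y 0 m - x 0 m.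
  move=> i m /existsP [l /andP [li lm]].
  have li' : l \in ttype V y i by rewrite Hty.
  have lm' : l \in ttype V y m by rewrite Hty.
  move: li lm li' lm'; rewrite !ttypeP => /forallP Hi /forallP Hm /forallP Hi' /forallP Hm'.
  have := Hi m; have := Hm i; have := Hi' m; have := Hm' i; lra.
exists (y 0 ord0 - x 0 ord0) => j.
have : (y 0 j - x 0 j == y 0 ord0 - x 0 ord0).
  apply: (fclosed_connect (a := [pred j | y 0 j - x 0 j == y 0 ord0 - x 0 ord0]) _ (Hc ord0 j)) => //=.
  by move=> a b /Hy -> .
move/eqP; lra.
Qed.
End Trop.

Lemma ttype_eJ (R : realType) (d n : nat) (B : 'I_n -> {set 'I_(d.+1)})
  (J : {set 'I_(d.+1)}) m l : B l != set0 ->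
  (l \in ttype (fun l => - eJ R (B l)) (- eJ R J) m) =
  if B l \subset J then (m \in B l) || (m \notin J) else (m \in B l) && (m \notin J).
Proof.
move=> /set0Pn [i0 i0B]; rewrite ffunE inE.
case: ifP => sub.
  have i0J := subsetP sub i0 i0B.
  apply/forallP/idP => [H|Hm i].
    have := H i0; rewrite !mxE i0B i0J.
    by case: (m \in B l); case: (m \in J) => //=; lra.
  rewrite !mxE.
  case: (boolP (i \in B l)) => iB.
    rewrite (subsetP sub i iB); move: Hm.
    case: (m \in B l); case: (m \in J) => //=; lra.
  move: Hm; case: (m \in B l); case: (m \in J); case: (i \in J) => //=; lra.
have [i1 i1B i1J] : exists2 i1, i1 \in B l & i1 \notin J.
  by apply/subsetPn; rewrite sub.
apply/forallP/idP => [H|Hm i].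
  have := H i1; rewrite !mxE i1B (negbTE i1J).
  by case: (m \in B l); case: (m \in J) => //=; lra.
rewrite !mxE; move/andP: Hm => [-> /negbTE ->].
case: (i \in B l); case: (i \in J) => //=; lra.
Qed.

Lemma exists_max (R : realType) d (f : 'I_(d.+1) -> R) : exists i, forall j, f j <= f i.
Proof.
case: (@extremumP R _ (fun a b : R => b <= a) ord0 xpredT f) => //.
- by move=> a b c ba cb; exact: le_trans cb ba.
- by move=> a b; exact: le_total.
by move=> i _ H; exists i => j; exact: H.
Qed.

Lemma pv_shape (R : realType) (d n : nat) (B : 'I_n -> {set 'I_(d.+1)}) (x : 'rV[R]_(d.+1)) :
  (0 < d)%N ->
  (forall i m, connect (hrel (fun l => - eJ R (B l)) x) i m) ->
  exists (M : R) imax (J : {set 'I_(d.+1)}), [/\ imax \notin J,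
    forall i, x 0 i = M - (if i \in J then 1 else 0) &
    forall e, e \in J -> exists l, e \in B l /\ B l \subset J].
Proof.
set V := fun l => - eJ R (B l) => d0 Hc.
have [imax Hmax] := exists_max (fun i => x 0 i).
have cover : forall e, exists l, l \in ttype V x e.
  move=> e; case: (boolP [exists l, l \in ttype V x e]) => [/existsP //|none].
  pose m : 'I_(d.+1) := if e == ord0 then ord_max else ord0.
  have me : m != e.
    rewrite /m; case: ifP => [/eqP ->|/negbT ne]; last by rewrite eq_sym.
    by apply/eqP => /(congr1 val) /= E; rewrite E in d0.
  have : pred1 e m.
    apply: (fclosed_connect _ (Hc e m)) => //= a b /existsP [l /andP [la lb]] /eqP ae.
    by subst a; move: none; rewrite negb_exists => /forallP /(_ l); rewrite la.
  by rewrite /= (negbTE me).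
have low : forall e, (x 0 imax) - 1 <= x 0 e.
  move=> e; have [l] := cover e; rewrite ttypeP => /forallP /(_ imax).
  rewrite /V !mxE; case: (e \in B l); case: (imax \in B l); lra.
have vals : forall i, (x 0 i == x 0 imax) || (x 0 i == (x 0 imax) - 1).
  move=> i; apply: (fclosed_connect (a := [pred j | (x 0 j == x 0 imax) || (x 0 j == x 0 imax - 1)]) _ (Hc imax i)); last by rewrite /= eqxx.
  move=> a b /existsP [l /andP [la lb]] Ha.
  move: la lb; rewrite !ttypeP => /forallP /(_ b) Hab /forallP /(_ a) Hba.
  have := low b; have := Hmax b; move: Hab Hba; rewrite /V !mxE.
  move: Ha => /orP [] /eqP Ha;
  case: (a \in B l); case: (b \in B l) => /= H1 H2 H3 H4;
  first [apply/orP; left; apply/eqP; lra | apply/orP; right; apply/eqP; lra | exfalso; lra].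
exists (x 0 imax), imax, [set i | x 0 i != x 0 imax]; split.
- by rewrite inE negbK.
- move=> i; rewrite inE; case: (eqVneq (x 0 i) (x 0 imax)) => [->|ne] /=; first lra.
  by move: (vals i); rewrite (negbTE ne) /= => /eqP ->.
move=> e; rewrite inE => eJ'.
have xe : x 0 e = (x 0 imax) - 1 by move: (vals e); rewrite (negbTE eJ') /= => /eqP.
have [l] := cover e; rewrite ttypeP => /forallP H.
exists l; split.
  have := H imax; rewrite /V !mxE xe; case: (e \in B l) => //=.
  case: (imax \in B l); lra.
apply/subsetP => i iB; rewrite inE; apply/negP => /eqP xi.
have := H i; rewrite /V !mxE xe xi iB.
case: (e \in B l); lra.
Qed.

Theorem mainTheorem7 (R : realType) (Vt : finType) (d : nat)
  (src tgt : 'I_(d.+1) -> Vt) (n : nat) (B : 'I_n -> {set 'I_(d.+1)}) :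
  simple_graph src tgt ->
  connected_graph src tgt ->
  bridgeless src tgt ->
  injective B ->
  (forall F, spanning_tree src tgt F <-> exists i, B i = F) ->
  let V : 'I_n -> 'rV[R]_(d.+1) := fun l => - eJ R (B l) in
  (* (1) *)
  (forall x : 'rV[R]_(d.+1),
     pseudovertex V x <->
     exists I : {set 'I_n}, tequiv x (- eJ R (\bigcup_(i in I) B i))) /\
  (* (2) *)
  (forall x : 'rV[R]_(d.+1),
     pseudovertex (fun i : 'I_(d.+1) => - eJ R [set i]) x <->
     exists J : {set 'I_(d.+1)},
       (1 <= #|J| <= d)%N /\ tequiv x (- eJ R J)) /\
  (* (3) *)
  (forall J : {set 'I_(d.+1)},
     pseudovertex V (- eJ R J) ->
     let T0 := ttype V 0 in
     ttype V (- eJ R J) =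
       [ffun j => if j \in J then T0 j :\: \bigcup_(i in ~: J) T0 i
                  else T0 j :|: \bigcap_(i in ~: J) ~: T0 i]).
Proof.
move=> sG cG bG injB HB V.
have d0 := d_pos sG bG.
have Bne : forall l, B l != set0.
  by move=> l; apply: (tree_nonempty sG); apply/HB; exists l.
have TT : forall J m l, (l \in ttype V (- eJ R J) m) =
    (if B l \subset J then (m \in B l) || (m \notin J) else (m \in B l) && (m \notin J)).
  by move=> J m l; apply: ttype_eJ.
have hrelT : forall k (W : 'I_k -> 'rV[R]_(d.+1)) x y, tequiv x y -> hrel W x = hrel W y.
  by move=> k W x y H; rewrite /hrel (ttype_tequiv W H).
split.
  move=> x; rewrite pv_conn; split.
    move=> Hc; have [M [imax [J [imJ Hx HJ]]]] := pv_shape d0 Hc.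
    exists [set l | B l \subset J].
    have -> : \bigcup_(k in [set l | B l \subset J]) B k = J.
      apply/setP => e; apply/bigcupP/idP => [[l]|eJ']; first by rewrite inE => /subsetP; apply.
      by have [l [eB BJ]] := HJ e eJ'; exists l; rewrite ?inE.
    by exists M => i; rewrite Hx !mxE; case: (i \in J); lra.
  move=> [I Hx] i m; rewrite (hrelT _ _ _ _ Hx).
  move: i m; set J := \bigcup_(k in I) B k.
  have deg : J = set0 \/ J = setT -> forall i m, connect (hrel V (- eJ R J)) i m.
    move=> HJ0 i m; have [F [iF mF TF]] := common_tree sG cG i m.
    have [l Bl] := (HB F).1 TF; apply: connect1; apply/existsP; exists l.
    rewrite !TT Bl; case: HJ0 => ->.
      by rewrite subset0 -Bl (negbTE (Bne l)) Bl !inE iF mF.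
    by rewrite subsetT iF mF.
  case: (eqVneq J set0) => [J0|Jn0]; first by apply: deg; left.
  case: (boolP [exists j, j \notin J]) => [/existsP [j0 j0J]|/existsPn Hall]; last first.
    by apply: deg; right; apply/setP => j; rewrite inE; move: (Hall j); rewrite negbK.
  have [j1 j1J] := set0Pn _ Jn0.
  have [l1 l1I j1B] := bigcupP j1J.
  have l1J : B l1 \subset J by apply: bigcup_sup.
  have hub : forall i, hrel V (- eJ R J) i j0.
    move=> i; apply/existsP; case: (boolP (i \in J)) => iJ.
      have [l lI iB] := bigcupP iJ.
      have lJ : B l \subset J by apply: bigcup_sup.
      by exists l; rewrite !TT lJ iB j0J orbT.
    by exists l1; rewrite !TT l1J iJ j0J !orbT.
  move=> i m; apply: connect_trans (connect1 (hub i)) _.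
  by rewrite hconnC; apply: connect1.
split.
  move=> x.
  have TT' : forall J m l, (l \in ttype (fun i : 'I_(d.+1) => - eJ R [set i]) (- eJ R J) m) =
      (if l \in J then (m == l) || (m \notin J) else (m == l) && (m \notin J)).
    move=> J m l; rewrite (@ttype_eJ R d d.+1 (fun i => [set i])) ?sub1set ?inE //.
    by apply/set0Pn; exists l; rewrite inE.
  rewrite pv_conn; split.
    move=> Hc; have [M [imax [J [imJ Hx HJ]]]] := pv_shape (B := fun i => [set i]) d0 Hc.
    have Hte : tequiv x (- eJ R J) by exists M => i; rewrite Hx !mxE; case: (i \in J); lra.
    exists J; split => //; apply/andP; split.
      rewrite card_gt0; apply/negP => /eqP J0.
      have := Hc ord0 ord_max; rewrite (hrelT _ (fun i : 'I_(d.+1) => - eJ R [set i]) _ _ Hte) J0 => H.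
      have : pred1 ord0 (ord_max : 'I_(d.+1)).
        apply: (fclosed_connect _ H) => //= a b /existsP [l /andP []].
        by rewrite !TT' !inE /= !andbT => /eqP -> /eqP ->.
      by move=> /= /eqP /(congr1 val) /= E; rewrite E in d0.
    have : (#|J| < #|[set: 'I_(d.+1)]|)%N.
      by apply: proper_card; rewrite properT; apply: contraNneq imJ => ->; rewrite inE.
    by rewrite cardsT card_ord.
  move=> [J [/andP [c1 c2] Hx]] i m; rewrite (hrelT _ _ _ _ Hx).
  have [j1 j1J] := card_gt0P c1.
  have [j0 j0J] : exists j0, j0 \notin J.
    case: (boolP [exists j, j \notin J]) => [/existsP //|/existsPn Hall].
    have JT : J = setT by apply/setP => j; rewrite inE; move: (Hall j); rewrite negbK.
    by move: c2; rewrite JT cardsT card_ord ltnn.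
  have hub : forall k, hrel (fun i : 'I_(d.+1) => - eJ R [set i]) (- eJ R J) k j0.
    move=> k; apply/existsP; case: (boolP (k \in J)) => kJ.
      by exists k; rewrite !TT' kJ eqxx j0J orbT.
    by exists j1; rewrite !TT' j1J kJ j0J !orbT.
  apply: connect_trans (connect1 (hub i)) _.
  by rewrite hconnC; apply: connect1.
move=> J _ T0; rewrite /T0.
have E0 : ttype V 0 = ttype V (- eJ R set0).
  by apply: ttype_tequiv; exists 0 => i; rewrite !mxE inE; lra.
have T0E : forall i l, (l \in ttype V (- eJ R set0) i) = (i \in B l).
  by move=> i l; rewrite TT subset0 (negbTE (Bne l)) inE andbT.
apply/ffunP => j; rewrite [RHS]ffunE E0; apply/setP => l.
have U : (l \in \bigcup_(i in ~: J) ttype V (- eJ R set0) i) = ~~ (B l \subset J).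
  apply/bigcupP/idP => [[i iJ]|/subsetPn [i iB iJ]].
    rewrite T0E => iB; apply/negP => /subsetP /(_ i iB); move: iJ; rewrite inE => /negP.
    by [].
  by exists i; rewrite ?inE // T0E.
have C : (l \in \bigcap_(i in ~: J) ~: ttype V (- eJ R set0) i) = (B l \subset J).
  apply/bigcapP/subsetP => [H i iB|H i iJ].
    apply: contraT => iJ; have := H i; rewrite !inE T0E iB => /(_ iJ).
    by [].
  rewrite inE T0E; apply/negP => /H; move: iJ; rewrite inE => /negP.
  by [].
rewrite TT; case: (boolP (j \in J)) => jJ.
  by rewrite inE U T0E; case: (B l \subset J); rewrite /= ?orbF ?andbF ?andbT.
by rewrite in_setU C T0E; case: (B l \subset J); rewrite /= ?orbF ?orbT ?andbT.
Qed.
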